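(* Let $\lambda\in(0,1/e)$, $\gamma>0$, $A\subset\mathbb{C}$, and let $f$ be a bilipschitz mapping, i.e. there exist $0<c<C<\infty$ with $c\leq|f(x)-f(y)|/|x-y|\leq C$ for all $x\neq y$. If $\mathcal{H}^{h_{\lambda,\gamma}}(A)=0$, then $\mathcal{H}^{h_{\lambda,\gamma}}(f(A))=0$; if $\mathcal{H}^{h_{\lambda,\gamma}}(A)=\infty$, then $\mathcal{H}^{h_{\lambda,\gamma}}(f(A))=\infty$.
   Context: For $\lambda\in(0,1/e)$ let $E_\lambda(z)=\lambda e^z$; it has a unique real repelling fixed point $\beta_\lambda$. Let $L_\lambda$ be the entire function with $L_\lambda(0)=\beta_\lambda$, $L_\lambda'(0)=1$ and $E_\lambda(L_\lambda(z))=L_\lambda(\beta_\lambda z)$ for all $z$, and let $\Phi_\lambda=(L_\lambda|_{\mathbb{R}})^{-1}$ (an increasing function tending to $\infty$). The gauge function is $h_{\lambda,\gamma}(t)=t^2\Phi_\lambda(1/t)^\gamma$ for small $t>0$ and $h_{\lambda,\gamma}(0)=0$. For a gauge function $h$ and $A\subset\mathbb{C}$, $\mathcal{H}^h(A)=\lim_{\delta\to0}\inf\{\sum_i h(\operatorname{diam}A_i): A\subset\bigcup_i A_i,\ \operatorname{diam}A_i<\delta\}$. *)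

(* Defs.v *)
From Stdlib Require Import Reals.
From Coquelicot Require Import Coquelicot.
Open Scope R_scope.

Definition Cexp (z : C) : C :=
  (exp (fst z) * cos (snd z), exp (fst z) * sin (snd z)).

Definition E_lam (lam : R) (z : C) : C := Cmult (RtoC lam) (Cexp z).

Definition entire (g : C -> C) : Prop :=
  forall z : C, ex_derive (K := C_AbsRing) (V := C_NormedModule) g z.

Definition gauge (Phi : R -> R) (gam : R) (t : R) : R :=
  if Rle_dec t 0 then 0 else t ^ 2 * Rpower (Phi (/ t)) gam.

(* diameter of a subset of C (diam of the empty set is 0) *)
Definition diam (A : C -> Prop) : Rbar :=
  Lub_Rbar (fun r => r = 0 \/ exists x y, A x /\ A y /\ r = Cmod (Cminus x y)).

(* H^h_delta(A): infimum of sum_i h(diam A_i) over countable covers with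
   diam A_i < delta (finite covers are included by padding with empty sets) *)
Definition Hdelta (h : R -> R) (delta : R) (A : C -> Prop) : Rbar :=
  Glb_Rbar (fun s : R => exists U : nat -> C -> Prop,
    (forall z, A z -> exists i, U i z) /\
    (forall i, Rbar_lt (diam (U i)) delta) /\
    is_series (fun i => h (real (diam (U i)))) s).

(* H^h(A) = lim_{delta -> 0} H^h_delta(A) = sup_{delta > 0} H^h_delta(A)
   (H^h_delta is nonincreasing in delta) *)
Definition Hmeas (h : R -> R) (A : C -> Prop) : Rbar :=
  Lub_Rbar (fun r => exists delta, 0 < delta /\ Rbar_le r (Hdelta h delta A)).

Definition image (f : C -> C) (A : C -> Prop) : C -> Prop :=
  fun w => exists z, A z /\ w = f z.

(* Main.v *)
Require Import Defs.
From Stdlib Require Import Reals Lra Classical ClassicalEpsilon.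
From Coquelicot Require Import Coquelicot.
Open Scope R_scope.

Definition Sset (h : R -> R) (delta : R) (X : C -> Prop) (s : R) : Prop :=
  exists U : nat -> C -> Prop,
    (forall z, X z -> exists i, U i z) /\
    (forall i, Rbar_lt (diam (U i)) delta) /\
    is_series (fun i => h (real (diam (U i)))) s.

Definition Transfer (h : R -> R) (X Y : C -> Prop) (K : R) : Prop :=
  forall delta, 0 < delta -> exists delta', 0 < delta' /\
   forall s, Sset h delta' X s -> exists s', Sset h delta Y s' /\ s' <= K * s.

Lemma series_nonneg (a : nat -> R) s : (forall n, 0 <= a n) -> is_series a s -> 0 <= s.
Proof.
  intros Ha Hs. rewrite <- (is_series_unique _ _ Hs).
  assert (H0 : Series (fun n => 0 * a n) = 0).
  { rewrite Series_scal_l. ring. }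
  rewrite <- H0. apply Series_le.
  - intros n; split; [rewrite Rmult_0_l; lra| specialize (Ha n); lra].
  - eexists; exact Hs.
Qed.

Lemma Hdelta_lb h delta X s : Sset h delta X s -> Rbar_le (Hdelta h delta X) s.
Proof.
  intros Hs. destruct (Glb_Rbar_correct (fun s => Sset h delta X s)) as [H1 _].
  apply H1. exact Hs.
Qed.

Lemma Hdelta_glb h delta X (m : R) :
  (forall s, Sset h delta X s -> m <= s) -> Rbar_le m (Hdelta h delta X).
Proof.
  intros H. destruct (Glb_Rbar_correct (fun s => Sset h delta X s)) as [_ H2].
  apply H2. intros s Hs. simpl. apply H. exact Hs.
Qed.

Lemma Hmeas_ub h X delta (r : R) : 0 < delta -> Rbar_le r (Hdelta h delta X) ->
  Rbar_le r (Hmeas h X).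
Proof.
  intros Hd Hr. destruct (Lub_Rbar_correct (fun r => exists delta, 0 < delta /\
     Rbar_le r (Hdelta h delta X))) as [H1 _].
  apply H1. exists delta; auto.
Qed.

Lemma zero_transfer h A B K : (forall t, 0 <= h t) -> 0 <= K -> Transfer h A B K ->
  Hmeas h A = Finite 0 -> Hmeas h B = Finite 0.
Proof.
  intros hpos Kpos T HA. apply is_lub_Rbar_unique. split.
  - intros r [delta [Hd Hr]]. simpl.
    destruct (T delta Hd) as [d' [Hd' Hc]].
    apply Rnot_lt_le; intros Hr0.
    set (e := r / (K + 1)).
    assert (He : 0 < e) by (unfold e; apply Rdiv_lt_0_compat; lra).
    assert (Hex : exists s, Sset h d' A s /\ s < e).
    { apply NNPP; intros Hn.
      assert (Hle : Rbar_le e (Hdelta h d' A)).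
      { apply Hdelta_glb. intros s Hs. apply Rnot_lt_le. intros Hlt.
        apply Hn. exists s; auto. }
      pose proof (Hmeas_ub h A d' e Hd' Hle) as Hu. rewrite HA in Hu. simpl in Hu. lra. }
    destruct Hex as [s [Hs Hse]].
    destruct (Hc s Hs) as [s' [Hs' Hss']].
    pose proof (Hdelta_lb _ _ _ _ Hs') as Hl.
    pose proof (Rbar_le_trans _ _ _ Hr Hl) as Hrs. simpl in Hrs.
    assert (K * s <= K * e) by (apply Rmult_le_compat_l; lra).
    assert (K * e < r).
    { unfold e. apply Rmult_lt_reg_r with (K+1). lra.
      field_simplify; [|lra]. nra. }
    lra.
  - intros b Hb. apply Hb. exists 1. split; [lra|].
    apply Hdelta_glb. intros s [U [_ [_ Hs]]].
    eapply series_nonneg; [|exact Hs]. intros; apply hpos.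
Qed.

Lemma inf_transfer h A B K : 0 <= K -> Transfer h B A K ->
  Hmeas h A = p_infty -> Hmeas h B = p_infty.
Proof.
  intros Kpos T HA.
  assert (Hall : forall M : R, Rbar_le M (Hmeas h B)).
  { intros M.
    assert (Hex : exists (r : R) dA, 0 < dA /\ Rbar_le r (Hdelta h dA A) /\ K * M < r).
    { apply NNPP; intros Hn.
      assert (Hub : Rbar_le (Hmeas h A) (K * M)).
      { destruct (Lub_Rbar_correct (fun r => exists delta, 0 < delta /\
          Rbar_le r (Hdelta h delta A))) as [_ H2]. apply H2.
        intros r [d [Hd Hr]]. simpl. apply Rnot_lt_le. intros Hlt.
        apply Hn. exists r, d. auto. }
      rewrite HA in Hub. simpl in Hub. exact Hub. }
    destruct Hex as [r [dA [HdA [Hr HrM]]]].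
    destruct (T dA HdA) as [dB [HdB Hc]].
    apply (Hmeas_ub h B dB); auto.
    apply Hdelta_glb. intros s Hs.
    destruct (Hc s Hs) as [s' [Hs' Hss']].
    pose proof (Hdelta_lb _ _ _ _ Hs') as Hl.
    pose proof (Rbar_le_trans _ _ _ Hr Hl) as Hrs. simpl in Hrs.
    apply Rnot_lt_le; intros Hlt. assert (K * s <= K * M) by (apply Rmult_le_compat_l; lra). lra. }
  destruct (Hmeas h B) as [v| |] eqn:E.
  - specialize (Hall (v + 1)). simpl in Hall. lra.
  - reflexivity.
  - specialize (Hall 0). simpl in Hall. contradiction.
Qed.

Lemma diam_ge0 U : Rbar_le 0 (diam U).
Proof. destruct (Lub_Rbar_correct (fun r => r = 0 \/ exists x y, U x /\ U y /\ r = Cmod (Cminus x y))) as [H _].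
  apply H. left; reflexivity. Qed.

Lemma diam_pt U x y : U x -> U y -> Rbar_le (Cmod (Cminus x y)) (diam U).
Proof. intros Hx Hy. destruct (Lub_Rbar_correct (fun r => r = 0 \/ exists x y, U x /\ U y /\ r = Cmod (Cminus x y))) as [H _].
  apply H. right; exists x, y; auto. Qed.

Lemma diam_le U (d : R) : 0 <= d -> (forall x y, U x -> U y -> Cmod (Cminus x y) <= d) ->
  Rbar_le (diam U) d.
Proof. intros Hd H. destruct (Lub_Rbar_correct (fun r => r = 0 \/ exists x y, U x /\ U y /\ r = Cmod (Cminus x y))) as [_ H2].
  apply H2. intros r [->|[x [y [Hx [Hy ->]]]]]; simpl; auto. Qed.

Lemma diam_fin U (d : R) : Rbar_le (diam U) d -> diam U = Finite (real (diam U)).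
Proof. intros H. pose proof (diam_ge0 U). destruct (diam U); simpl in *; easy. Qed.

Lemma diam_fin_lt U (d : R) : Rbar_lt (diam U) d -> diam U = Finite (real (diam U)).
Proof. intros H. apply (diam_fin U d). apply Rbar_lt_le; auto. Qed.

Lemma diam_real_ge0 U (d : R) : Rbar_le (diam U) d -> 0 <= real (diam U).
Proof. intros H. pose proof (diam_ge0 U). rewrite (diam_fin U d H) in H0. exact H0. Qed.

Lemma diam_real_pt U (d : R) x y : Rbar_le (diam U) d -> U x -> U y ->
  Cmod (Cminus x y) <= real (diam U).
Proof. intros H Hx Hy. pose proof (diam_pt U x y Hx Hy). rewrite (diam_fin U d H) in H0. exact H0. Qed.

Lemma diam_real_le U (d0 d : R) : Rbar_le (diam U) d0 -> 0 <= d ->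
  (forall x y, U x -> U y -> Cmod (Cminus x y) <= d) -> real (diam U) <= d.
Proof. intros H Hd H2. pose proof (diam_le U d Hd H2). rewrite (diam_fin U d0 H) in H0. exact H0. Qed.

Lemma Cmod_minus_tri x y z : Cmod (Cminus x z) <= Cmod (Cminus x y) + Cmod (Cminus y z).
Proof. replace (Cminus x z) with (Cplus (Cminus x y) (Cminus y z)).
  apply Cmod_triangle. unfold Cminus, Cplus, Copp; simpl. f_equal; ring. Qed.

Lemma Cmod_minus_sym x y : Cmod (Cminus x y) = Cmod (Cminus y x).
Proof. replace (Cminus x y) with (Copp (Cminus y x)). apply Cmod_opp.
  unfold Cminus, Cplus, Copp; simpl. f_equal; ring. Qed.

Lemma Cmod_shift u r : Cmod (Cminus (Cplus u (RtoC r)) u) = Rabs r.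
Proof. replace (Cminus (Cplus u (RtoC r)) u) with (RtoC r). apply Cmod_R.
  unfold Cminus, Cplus, Copp, RtoC; simpl. destruct u; simpl. f_equal; ring. Qed.

Lemma series_cmp (a b : nat -> R) K s : (forall n, 0 <= a n <= K * b n) ->
  is_series b s -> exists s', is_series a s' /\ s' <= K * s.
Proof.
  intros H Hb.
  assert (Hkb : is_series (fun n => K * b n) (K * s)).
  { apply (is_series_scal_l K b s Hb). }
  assert (Ea : ex_series a).
  { apply (ex_series_le a (fun n => K * b n)).
    - intros n. change (norm (a n)) with (Rabs (a n)). rewrite Rabs_pos_eq; apply H.
    - eexists; exact Hkb. }
  exists (Series a). split. apply Series_correct; auto.
  rewrite <- (is_series_unique _ _ Hkb). apply Series_le; auto. eexists; exact Hkb.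
Qed.

Lemma Cminus_self x : Cmod (Cminus x x) = 0.
Proof. replace (Cminus x x) with (RtoC 0). rewrite Cmod_R. apply Rabs_R0.
  destruct x; unfold Cminus, Cplus, Copp, RtoC; simpl; f_equal; ring. Qed.

Lemma Cminus_neq x y : x <> y -> 0 < Cmod (Cminus x y).
Proof. intros H. apply Cmod_gt_0. intros E. apply H.
  destruct x as [a b], y as [a' b']. unfold Cminus, Cplus, Copp in E; simpl in E.
  injection E; intros. f_equal; lra. Qed.

Lemma bl_ineq (f : C -> C) c Cc : 0 < c ->
  (forall x y : C, x <> y -> c <= Cmod (Cminus (f x) (f y)) / Cmod (Cminus x y) <= Cc) ->
  forall x y, c * Cmod (Cminus x y) <= Cmod (Cminus (f x) (f y)) <= Cc * Cmod (Cminus x y).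
Proof.
  intros Hc H x y. destruct (classic (x = y)) as [->|Hne].
  - rewrite !Cminus_self. lra.
  - pose proof (Cminus_neq _ _ Hne) as Hp. destruct (H x y Hne) as [H1 H2].
    set (a := Cmod (Cminus (f x) (f y))) in *. set (b := Cmod (Cminus x y)) in *.
    split.
    + apply Rmult_le_reg_r with (/ b). apply Rinv_0_lt_compat; auto.
      rewrite Rmult_assoc, Rinv_r by lra. rewrite Rmult_1_r. exact H1.
    + apply Rmult_le_reg_r with (/ b). apply Rinv_0_lt_compat; auto.
      rewrite Rmult_assoc, Rinv_r by lra. rewrite Rmult_1_r. exact H2.
Qed.

Definition GaugeProp (h : R -> R) (a b : R) : Prop :=
  exists delta0 Kc, 0 < delta0 /\ 0 <= Kc /\
    forall d t, 0 <= d < delta0 -> a * d <= t <= b * d -> h t <= Kc * h d.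

Lemma fwd_transfer h (f : C -> C) A c Cc : 0 < c < Cc ->
  (forall x y, c * Cmod (Cminus x y) <= Cmod (Cminus (f x) (f y)) <= Cc * Cmod (Cminus x y)) ->
  (forall t, 0 <= h t) -> GaugeProp h c Cc ->
  exists K, 0 <= K /\ Transfer h A (image f A) K.
Proof.
  intros [Hc HcC] Hbl hpos [d0 [Kc [Hd0 [HKc HG]]]].
  exists Kc. split; auto. intros delta Hd.
  exists (Rmin (delta / Cc) d0). split.
  { apply Rmin_pos; auto. apply Rdiv_lt_0_compat; lra. }
  intros s [U [Hcov [Hdiam Hs]]].
  set (V := fun i => image f (U i)).
  assert (Key : forall i, Rbar_lt (diam (V i)) delta /\
     h (real (diam (V i))) <= Kc * h (real (diam (U i)))).
  { intros i. specialize (Hdiam i).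
    assert (HU : Rbar_le (diam (U i)) (Rmin (delta / Cc) d0)) by (apply Rbar_lt_le; auto).
    set (D := real (diam (U i))).
    assert (HD0 : 0 <= D) by (apply (diam_real_ge0 _ _ HU)).
    assert (HDlt : D < Rmin (delta / Cc) d0).
    { unfold D. rewrite (diam_fin_lt _ _ Hdiam) in Hdiam. exact Hdiam. }
    assert (HVle : Rbar_le (diam (V i)) (Cc * D)).
    { apply diam_le. nra. intros x y [x0 [Hx0 ->]] [y0 [Hy0 ->]].
      pose proof (Hbl x0 y0). pose proof (diam_real_pt _ _ x0 y0 HU Hx0 Hy0).
      fold D in H0. nra. }
    assert (HCD : Cc * D < delta).
    { assert (D < delta / Cc) by (eapply Rlt_le_trans; [exact HDlt| apply Rmin_l]).
      apply Rmult_lt_reg_r with (/ Cc). apply Rinv_0_lt_compat; lra.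
      replace (Cc * D * / Cc) with D by (field; lra). exact H. }
    split.
    - eapply Rbar_le_lt_trans. exact HVle. exact HCD.
    - apply HG.
      + split; auto. eapply Rlt_le_trans; [exact HDlt| apply Rmin_r].
      + split.
        * assert (D <= real (diam (V i)) / c).
          { apply (diam_real_le _ _ _ HU).
            apply Rdiv_le_0_compat; [apply (diam_real_ge0 _ _ HVle)|lra].
            intros x y Hx Hy. pose proof (Hbl x y).
            assert (Cmod (Cminus (f x) (f y)) <= real (diam (V i))).
            { apply (diam_real_pt _ _ _ _ HVle); [exists x| exists y]; auto. }
            apply Rmult_le_reg_l with c; auto. field_simplify; lra. }
          apply Rmult_le_reg_r with (/ c). apply Rinv_0_lt_compat; lra.
          replace (c * D * / c) with D by (field; lra). exact H.
        * pose proof HVle as H'. rewrite (diam_fin _ _ HVle) in H'. exact H'. }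
  destruct (series_cmp (fun i => h (real (diam (V i)))) (fun i => h (real (diam (U i)))) Kc s)
    as [s' [Hs' Hle]]; auto.
  { intros n; split; [apply hpos| apply Key]. }
  exists s'. split; auto. exists V. split; [|split; auto].
  - intros w [z [Hz ->]]. destruct (Hcov z Hz) as [i Hi]. exists i. exists z; auto.
  - intros i; apply Key.
Qed.

Lemma bwd_transfer h (f : C -> C) A c Cc : 0 < c < Cc ->
  (forall x y, c * Cmod (Cminus x y) <= Cmod (Cminus (f x) (f y)) <= Cc * Cmod (Cminus x y)) ->
  (forall t, 0 <= h t) -> h 0 = 0 -> GaugeProp h (/ Cc) (/ c + / Cc) ->
  exists K, 0 <= K /\ Transfer h (image f A) A K.
Proof.
  intros [Hc HcC] Hbl hpos h0 [d0 [Kc [Hd0 [HKc HG]]]].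
  set (b := / c + / Cc).
  assert (Hb : 0 < b) by (unfold b; assert (0 < / c) by (apply Rinv_0_lt_compat; lra);
     assert (0 < / Cc) by (apply Rinv_0_lt_compat; lra); lra).
  exists Kc. split; auto. intros delta Hd.
  exists (Rmin (delta / b) d0). split.
  { apply Rmin_pos; auto. apply Rdiv_lt_0_compat; lra. }
  intros s [V [Hcov [Hdiam Hs]]].
  set (P := fun i w => A w /\ V i (f w)).
  set (u := fun i => epsilon (inhabits (RtoC 0)) (P i)).
  set (dd := fun i => real (diam (V i))).
  set (U := fun i z => P i z \/ ((exists w, P i w) /\ z = Cplus (u i) (RtoC (dd i / Cc)))).
  assert (Key : forall i, Rbar_lt (diam (U i)) delta /\
     h (real (diam (U i))) <= Kc * h (dd i)).
  { intros i. specialize (Hdiam i).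
    assert (HV : Rbar_le (diam (V i)) (Rmin (delta / b) d0)) by (apply Rbar_lt_le; auto).
    set (d := dd i).
    assert (Hd0' : 0 <= d) by (apply (diam_real_ge0 _ _ HV)).
    assert (Hdlt : d < Rmin (delta / b) d0).
    { unfold d, dd. rewrite (diam_fin_lt _ _ Hdiam) in Hdiam. exact Hdiam. }
    assert (HPP : forall x y, P i x -> P i y -> Cmod (Cminus x y) <= d / c).
    { intros x y [_ Hx] [_ Hy]. pose proof (Hbl x y).
      pose proof (diam_real_pt _ _ _ _ HV Hx Hy). fold (dd i) d in H0.
      apply Rmult_le_reg_l with c; auto. field_simplify; lra. }
    assert (Hdc : 0 <= d / c) by (apply Rdiv_le_0_compat; lra).
    assert (HdC : 0 <= d / Cc) by (apply Rdiv_le_0_compat; lra).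
    assert (Hbd : d / c + d / Cc = b * d) by (unfold b; field; lra).
    assert (Hpu : forall x, P i x -> Cmod (Cminus (Cplus (u i) (RtoC (d / Cc))) x) <= b * d).
    { intros x Hx. assert (Pu : P i (u i)) by (apply epsilon_spec; exists x; auto).
      eapply Rle_trans. apply (Cmod_minus_tri _ (u i)).
      rewrite Cmod_shift, Rabs_pos_eq by lra. pose proof (HPP _ _ Pu Hx). lra. }
    assert (HUle : Rbar_le (diam (U i)) (b * d)).
    { apply diam_le. nra.
      intros x y [Hx|[Hex Hx]] [Hy|[Hey Hy]].
      - pose proof (HPP _ _ Hx Hy). lra.
      - subst y. rewrite Cmod_minus_sym. apply Hpu; auto.
      - subst x. apply Hpu; auto.
      - subst x y. rewrite Cminus_self. nra. }
    assert (Hbdd : b * d < delta).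
    { assert (d < delta / b) by (eapply Rlt_le_trans; [exact Hdlt| apply Rmin_l]).
      apply Rmult_lt_reg_r with (/ b). apply Rinv_0_lt_compat; lra.
      replace (b * d * / b) with d by (field; lra). exact H. }
    split.
    - eapply Rbar_le_lt_trans. exact HUle. exact Hbdd.
    - assert (Ht : real (diam (U i)) <= b * d).
      { pose proof HUle as H'. rewrite (diam_fin _ _ HUle) in H'. exact H'. }
      destruct (classic (exists w, P i w)) as [Hex|Hnex].
      + apply HG.
        * split; auto. eapply Rlt_le_trans; [exact Hdlt| apply Rmin_r].
        * split; auto.
          assert (Pu : P i (u i)) by (apply epsilon_spec; auto).
          assert (Hm : Cmod (Cminus (Cplus (u i) (RtoC (d / Cc))) (u i)) <= real (diam (U i))).
          { apply (diam_real_pt _ _ _ _ HUle). right; split; auto. left; auto. }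
          rewrite Cmod_shift, Rabs_pos_eq in Hm by lra.
          replace (/ Cc * d) with (d / Cc) by (field; lra). exact Hm.
      + assert (Ht0 : real (diam (U i)) <= 0).
        { apply (diam_real_le _ _ _ HUle). lra.
          intros x y [Hx|[Hx _]]; exfalso; apply Hnex; eauto. }
        pose proof (diam_real_ge0 _ _ HUle).
        replace (real (diam (U i))) with 0 by lra. rewrite h0.
        pose proof (hpos d). nra. }
  destruct (series_cmp (fun i => h (real (diam (U i)))) (fun i => h (real (diam (V i)))) Kc s)
    as [s' [Hs' Hle]]; auto.
  { intros n; split; [apply hpos| apply Key]. }
  exists s'. split; auto. exists U. split; [|split; auto].
  - intros z Hz. destruct (Hcov (f z)) as [i Hi]. exists z; auto. exists i. left. split; auto.
  - intros i; apply Key.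
Qed.

Definition PhiProp (Phi : R -> R) : Prop := forall K, 0 < K -> exists Y M, 0 < Y /\ 0 < M /\
  forall y z, Y <= y -> Y <= z -> z <= K * y -> 0 < Phi y /\ 0 < Phi z /\ Phi z <= M * Phi y.

Lemma gauge_nonneg Phi gam t : 0 <= gauge Phi gam t.
Proof. unfold gauge. destruct (Rle_dec t 0). lra.
  apply Rmult_le_pos. apply pow2_ge_0. unfold Rpower. left; apply exp_pos. Qed.

Lemma gauge_0 Phi gam : gauge Phi gam 0 = 0.
Proof. unfold gauge. destruct (Rle_dec 0 0); [reflexivity| lra]. Qed.

Lemma gauge_prop Phi gam a b : PhiProp Phi -> 0 < gam -> 0 < a -> a <= b ->
  GaugeProp (gauge Phi gam) a b.
Proof.
  intros HP Hg Ha Hab.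
  destruct (HP (/ a)) as [Y [M [HY [HM HYM]]]]. apply Rinv_0_lt_compat; auto.
  exists (/ (Y * (b + 1))), (b ^ 2 * Rpower M gam).
  assert (Hb : 0 < b) by lra.
  split. apply Rinv_0_lt_compat; nra.
  split. apply Rmult_le_pos. apply pow2_ge_0. unfold Rpower. left; apply exp_pos.
  intros d t [Hd0 Hdlt] [Hat Htb].
  destruct (Req_dec d 0) as [->|Hdn].
  - assert (t = 0) by nra. subst t. rewrite gauge_0. lra.
  - assert (Hd : 0 < d) by lra. assert (Ht : 0 < t) by nra.
    unfold gauge. destruct (Rle_dec t 0); [lra|]. destruct (Rle_dec d 0); [lra|].
    assert (Hy : Y * (b + 1) < / d).
    { rewrite <- (Rinv_inv (Y * (b+1))). apply Rinv_lt_contravar; auto.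
      apply Rmult_lt_0_compat; auto. apply Rinv_0_lt_compat; nra. }
    assert (Hz1 : / (b * d) <= / t).
    { apply Rinv_le_contravar; auto. }
    assert (Hz2 : / t <= / a * / d).
    { rewrite <- Rinv_mult. apply Rinv_le_contravar; nra. }
    assert (HYz : Y <= / t).
    { eapply Rle_trans; [|exact Hz1]. rewrite Rinv_mult.
      apply Rmult_le_reg_l with b; auto. rewrite <- Rmult_assoc, Rinv_r by lra. nra. }
    destruct (HYM (/ d) (/ t)) as [Py [Pz Pzy]]; try nra.
    apply Rle_trans with ((b * d) ^ 2 * Rpower (M * Phi (/ d)) gam).
    + apply Rmult_le_compat.
      * apply pow2_ge_0.
      * unfold Rpower; left; apply exp_pos.
      * apply pow_incr; lra.
      * apply Rle_Rpower_l; lra.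
    + rewrite <- Rpower_mult_distr by auto. right; ring.
Qed.

Section Real.
Variables (lam beta : R) (l Phi : R -> R) (eps : R).
Hypothesis Hlam : 0 < lam.
Hypothesis Hbeta : lam * exp beta = beta.
Hypothesis Hb1 : 1 < beta.
Hypothesis Hcont : forall x, continuous l x.
Hypothesis HPhil : forall x, Phi (l x) = x.
Hypothesis Hl0 : l 0 = beta.
Hypothesis Hfe : forall x, l (beta * x) = lam * exp (l x).
Hypothesis Heps : 0 < eps.
Hypothesis Hleps : beta < l eps.

Lemma l_inj a b : l a = l b -> a = b.
Proof. intros H. rewrite <- (HPhil a), <- (HPhil b), H. reflexivity. Qed.

Lemma ivt a b y : a <= b -> Rmin (l a) (l b) <= y <= Rmax (l a) (l b) ->
  exists x, a <= x <= b /\ l x = y.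
Proof. intros Hab H. destruct (IVT_gen_consistent l a b y Hcont H) as [x [Hx Hl]].
  exists x. rewrite Rmin_left, Rmax_right in Hx by lra. auto. Qed.

Lemma l_pos x : 0 < x -> beta < l x.
Proof.
  intros Hx. destruct (Rtotal_order (l x) beta) as [Hlt|[Heq|Hgt]]; auto.
  - exfalso. destruct (Rle_dec eps x).
    + destruct (ivt eps x beta) as [z [Hz Hlz]]; auto.
      rewrite Rmin_right, Rmax_left by lra. lra.
      rewrite <- Hl0 in Hlz. apply l_inj in Hlz. lra.
    + destruct (ivt x eps beta) as [z [Hz Hlz]]; try lra.
      rewrite Rmin_left, Rmax_right by lra. lra.
      rewrite <- Hl0 in Hlz. apply l_inj in Hlz. lra.
  - exfalso. rewrite <- Hl0 in Heq. apply l_inj in Heq. lra.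
Qed.

Lemma l_incr a b : 0 <= a -> a < b -> l a < l b.
Proof.
  intros Ha Hab. destruct (Req_dec a 0) as [->|Han].
  - rewrite Hl0. apply l_pos; lra.
  - destruct (Rtotal_order (l a) (l b)) as [H|[H|H]]; auto.
    + apply l_inj in H. lra.
    + exfalso. assert (beta < l b) by (apply l_pos; lra).
      destruct (ivt 0 a (l b)) as [z [Hz Hlz]]; try lra.
      rewrite Hl0, Rmin_left, Rmax_right by lra. lra.
      apply l_inj in Hlz. lra.
Qed.

Definition g u := lam * exp u.

Lemma g_grow u v : beta <= v -> v <= u -> g u - g v >= u - v.
Proof.
  intros Hv Hvu. unfold g.
  assert (exp u = exp v * exp (u - v)) by (rewrite <- exp_plus; f_equal; ring).
  rewrite H. pose proof (exp_ineq1_le (u - v)).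
  assert (lam * exp v >= beta).
  { rewrite <- Hbeta. apply Rle_ge, Rmult_le_compat_l; [lra|].
    destruct (Req_dec beta v); [subst; lra| left; apply exp_increasing; lra]. }
  set (A := lam * exp v) in *. set (E := exp (u - v)) in *.
  replace (lam * (exp v * E) - A) with (A * (E - 1)) by (unfold A; ring).
  assert (A * (E - 1) >= A * (u - v)) by (apply Rle_ge, Rmult_le_compat_l; lra).
  assert (A * (u - v) >= 1 * (u - v)) by (apply Rle_ge, Rmult_le_compat_r; lra).
  lra.
Qed.

Lemma g_grow_s u v : beta <= v -> v < u -> g u - g v > u - v.
Proof.
  intros Hv Hvu. unfold g.
  assert (exp u = exp v * exp (u - v)) by (rewrite <- exp_plus; f_equal; ring).
  rewrite H. pose proof (exp_ineq1_le (u - v)).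
  assert (lam * exp v >= beta).
  { rewrite <- Hbeta. apply Rle_ge, Rmult_le_compat_l; [lra|].
    destruct (Req_dec beta v); [subst; lra| left; apply exp_increasing; lra]. }
  set (A := lam * exp v) in *. set (E := exp (u - v)) in *.
  replace (lam * (exp v * E) - A) with (A * (E - 1)) by (unfold A; ring).
  assert (A * (E - 1) >= A * (u - v)) by (apply Rle_ge, Rmult_le_compat_l; lra).
  assert (A * (u - v) > 1 * (u - v)) by (apply Rmult_lt_compat_r; lra).
  lra.
Qed.

Lemma l_iter n : l (beta ^ n * eps) >= l eps + INR n * (g (l eps) - l eps).
Proof.
  induction n.
  - simpl. rewrite Rmult_1_l. lra.
  - replace (beta ^ S n * eps) with (beta * (beta ^ n * eps)) by (simpl; ring).
    rewrite Hfe. fold (g (l (beta ^ n * eps))). rewrite S_INR.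
    assert (Hd : g (l eps) - l eps > 0).
    { pose proof (g_grow_s (l eps) beta). unfold g in *. lra. }
    assert (HI : l (beta ^ n * eps) >= l eps).
    { pose proof (pos_INR n). nra. }
    pose proof (g_grow (l (beta ^ n * eps)) (l eps)). lra.
Qed.

Lemma l_surj z : beta < z -> exists x, 0 < x /\ l x = z.
Proof.
  intros Hz.
  assert (Hd : g (l eps) - l eps > 0).
  { pose proof (g_grow_s (l eps) beta). unfold g in *. lra. }
  destruct (nfloor_ex (Rabs z / (g (l eps) - l eps))) as [n [Hn1 Hn2]].
  { apply Rdiv_le_0_compat. apply Rabs_pos. lra. }
  pose proof (l_iter (S n)) as Hit. rewrite S_INR in Hit.
  assert (Habs : z <= Rabs z) by apply RRle_abs.
  assert (z <= l (beta ^ S n * eps)).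
  { assert (Rabs z <= (INR n + 1) * (g (l eps) - l eps)).
    { set (D := g (l eps) - l eps) in *. set (q := Rabs z / D) in *.
      assert (Rabs z = q * D) by (unfold q; field; lra). nra. }
    assert (l eps > 0) by lra. lra. }
  assert (Hpow : 0 < beta ^ S n * eps) by (apply Rmult_lt_0_compat; auto; apply pow_lt; lra).
  destruct (ivt 0 (beta ^ S n * eps) z) as [x [Hx Hlx]].
  { lra. }
  { rewrite Hl0. pose proof (l_pos _ Hpow). rewrite Rmin_left, Rmax_right; lra. }
  exists x. split; auto. destruct Hx as [Hx _]. destruct (Req_dec x 0) as [->|]; [|lra].
  rewrite Hl0 in Hlx. lra.
Qed.

Lemma Phi_pos z : beta < z -> 0 < Phi z.
Proof. intros Hz. destruct (l_surj z Hz) as [x [Hx <-]]. rewrite HPhil. auto. Qed.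

Lemma Phi_mono z1 z2 : beta < z1 -> z1 <= z2 -> Phi z1 <= Phi z2.
Proof. intros H1 H12. destruct (l_surj z1 H1) as [x1 [Hx1 <-]].
  destruct (l_surj z2 ltac:(lra)) as [x2 [Hx2 <-]]. rewrite !HPhil.
  apply Rnot_lt_le. intros Hlt. pose proof (l_incr x2 x1 ltac:(lra) Hlt). lra. Qed.

Lemma Phi_dbl y : beta < y -> Phi (lam * exp y) = beta * Phi y.
Proof. intros Hy. destruct (l_surj y Hy) as [x [Hx <-]]. rewrite <- Hfe, !HPhil. reflexivity. Qed.

Lemma exp_big K y : 0 < K -> 4 * K / lam <= y -> K * y <= lam * exp y.
Proof.
  intros HK Hy.
  assert (Hy0 : 0 < y) by (assert (0 < 4 * K / lam) by (apply Rdiv_lt_0_compat; lra); lra).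
  assert (exp y = exp (y/2) * exp (y/2)) by (rewrite <- exp_plus; f_equal; field).
  pose proof (exp_ineq1_le (y/2)).
  assert (y * y / 4 <= exp y) by nra.
  assert (4 * K <= lam * y).
  { apply Rmult_le_compat_l with (r := lam) in Hy; [|lra].
    replace (lam * (4 * K / lam)) with (4 * K) in Hy by (field; lra). lra. }
  nra.
Qed.

Lemma Phi_prop : PhiProp Phi.
Proof.
  intros K HK. exists (beta + 1 + 4 * K / lam), beta.
  assert (0 < 4 * K / lam) by (apply Rdiv_lt_0_compat; lra).
  split; [lra|]. split; [lra|].
  intros y z Hy Hz Hzy.
  split; [apply Phi_pos; lra|]. split; [apply Phi_pos; lra|].
  rewrite <- Phi_dbl by lra. apply Phi_mono. lra.
  pose proof (exp_big K y HK ltac:(lra)). lra.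
Qed.
End Real.
Lemma cont_l (L : C -> C) : entire L -> forall x, continuous (fun x => fst (L (RtoC x))) x.
Proof.
  intros He x.
  pose proof (ex_derive_continuous (K := C_AbsRing) (V := C_NormedModule) L (RtoC x) (He _)) as Hc.
  unfold continuous in *. apply filterlim_locally. intros eps.
  apply filterlim_locally with (eps := eps) in Hc.
  destruct Hc as [d Hd].
  exists d. intros y Hy. specialize (Hd (RtoC y)).
  unfold ball in *. simpl in *. unfold prod_ball, AbsRing_ball in *. simpl in *.
  apply Hd. change (Cmod (Cminus (RtoC y) (RtoC x)) < d).
  replace (Cminus (RtoC y) (RtoC x)) with (RtoC (y - x)).
  rewrite Cmod_R. exact Hy.
  unfold Cminus, Cplus, Copp, RtoC; simpl; f_equal; ring.
Qed.
Lemma der_eps (L : C -> C) beta :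
  L (RtoC 0) = RtoC beta ->
  is_derive (K := C_AbsRing) (V := C_NormedModule) L (RtoC 0) (RtoC 1) ->
  (forall x : R, Im (L (RtoC x)) = 0) ->
  exists eps, 0 < eps /\ beta < fst (L (RtoC eps)).
Proof.
  intros H0 [_ Hd] HIm.
  specialize (Hd (RtoC 0) (fun P H => H)).
  specialize (Hd (mkposreal (1/2) ltac:(lra))).
  destruct Hd as [d Hd].
  set (e := d / 2).
  assert (He : 0 < e) by (unfold e; destruct d; simpl; lra).
  exists e. split; auto.
  specialize (Hd (RtoC e)).
  unfold ball in Hd. simpl in Hd. unfold AbsRing_ball in Hd. simpl in Hd.
  change (Cmod (Cminus (RtoC e) (RtoC 0)) < d ->
    Cmod (Cminus (Cminus (L (RtoC e)) (L (RtoC 0))) (Cmult (Cminus (RtoC e) (RtoC 0)) (RtoC 1))) <=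
    1 / 2 * Cmod (Cminus (RtoC e) (RtoC 0))) in Hd.
  assert (E1 : Cminus (RtoC e) (RtoC 0) = RtoC e).
  { unfold Cminus, Cplus, Copp, RtoC; simpl; f_equal; ring. }
  rewrite E1, Cmod_R, Rabs_pos_eq in Hd by lra.
  rewrite H0 in Hd. specialize (HIm e). unfold Im in HIm.
  destruct (L (RtoC e)) as [a b]. simpl in HIm. subst b. simpl.
  assert (E2 : Cminus (Cminus (a, 0) (RtoC beta)) (Cmult (RtoC e) (RtoC 1)) = RtoC (a - beta - e)).
  { unfold Cminus, Cplus, Copp, Cmult, RtoC; simpl; f_equal; ring. }
  rewrite E2, Cmod_R in Hd.
  assert (Hdd : e < d) by (unfold e; destruct d; simpl; lra).
  specialize (Hd Hdd).
  pose proof (Rle_abs (-(a - beta - e))). rewrite Rabs_Ropp in H.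
  lra.
Qed.

Lemma fe_real (lam beta : R) (L : C -> C) :
  (forall z : C, E_lam lam (L z) = L (Cmult (RtoC beta) z)) ->
  (forall x : R, Im (L (RtoC x)) = 0) ->
  forall x, fst (L (RtoC (beta * x))) = lam * exp (fst (L (RtoC x))).
Proof.
  intros Hfe HIm x.
  assert (E : Cmult (RtoC beta) (RtoC x) = RtoC (beta * x)).
  { unfold Cmult, RtoC; simpl. f_equal; ring. }
  rewrite <- E, <- Hfe. specialize (HIm x). unfold Im in HIm.
  destruct (L (RtoC x)) as [a b]. simpl in *. subst b.
  unfold E_lam, Cexp, Cmult, RtoC; simpl. rewrite cos_0, sin_0. ring.
Qed.

Theorem mainTheorem4
  (lam gam beta : R) (L : C -> C) (Phi : R -> R)
  (A : C -> Prop) (f : C -> C) (c Cc : R) :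
  0 < lam < exp (-1) -> 0 < gam ->
  (* beta = beta_lambda: the real repelling fixed point of E_lambda *)
  lam * exp beta = beta -> 1 < lam * exp beta ->
  (* L = L_lambda *)
  entire L -> L (RtoC 0) = RtoC beta ->
  is_derive (K := C_AbsRing) (V := C_NormedModule) L (RtoC 0) (RtoC 1) ->
  (forall z : C, E_lam lam (L z) = L (Cmult (RtoC beta) z)) ->
  (* Phi = (L restricted to R)^{-1} *)
  (forall x : R, Im (L (RtoC x)) = 0 /\ Phi (Re (L (RtoC x))) = x) ->
  (* f bilipschitz *)
  0 < c < Cc ->
  (forall x y : C, x <> y ->
     c <= Cmod (Cminus (f x) (f y)) / Cmod (Cminus x y) <= Cc) ->
  (Hmeas (gauge Phi gam) A = Finite 0 ->
     Hmeas (gauge Phi gam) (image f A) = Finite 0) /\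
  (Hmeas (gauge Phi gam) A = p_infty ->
     Hmeas (gauge Phi gam) (image f A) = p_infty).
Proof.
  intros Hlam Hgam Hbeta Hb1 Hent HL0 Hder Hfe HPhi Hc Hbl.
  set (l := fun x => fst (L (RtoC x))).
  assert (HIm : forall x : R, Im (L (RtoC x)) = 0) by (intros x; apply HPhi).
  assert (HPhil : forall x, Phi (l x) = x) by (intros x; apply HPhi).
  assert (Hl0 : l 0 = beta) by (unfold l; rewrite HL0; reflexivity).
  assert (Hfe' : forall x, l (beta * x) = lam * exp (l x)) by (intros x; apply fe_real; auto).
  assert (Hb : 1 < beta) by lra.
  destruct (der_eps L beta HL0 Hder HIm) as [eps [Heps Hleps]].
  assert (PP : PhiProp Phi).
  { apply (Phi_prop lam beta l Phi eps); try tauto. apply cont_l; auto. }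
  pose proof (bl_ineq f c Cc ltac:(lra) Hbl) as Hbl'.
  assert (hpos : forall t, 0 <= gauge Phi gam t) by (intros; apply gauge_nonneg).
  split.
  - destruct (fwd_transfer (gauge Phi gam) f A c Cc Hc Hbl' hpos) as [K [HK T]].
    { apply gauge_prop; auto; lra. }
    apply (zero_transfer _ A (image f A) K); auto.
  - destruct (bwd_transfer (gauge Phi gam) f A c Cc Hc Hbl' hpos (gauge_0 Phi gam)) as [K [HK T]].
    { assert (0 < / c) by (apply Rinv_0_lt_compat; lra).
      assert (0 < / Cc) by (apply Rinv_0_lt_compat; lra).
      apply gauge_prop; auto; lra. }
    apply (inf_transfer _ A (image f A) K); auto.
Qed.
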